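(* Let $\tau$ be a uniformly random permutation of $\{1,\dots,n\}$ and let $S_n$ be the number of steps of the greedy walk from $1$ to $n$ in $G_n$ (as in the context). For every $\varepsilon>0$, \[ \mathbb{P}\bigl((2-\varepsilon)\log n\le S_n\le(2+\varepsilon)\log n\bigr)\to1\quad\text{as } n\to\infty, \] where $\log$ is the natural logarithm.
   Context: Vertices $V=\{1,\dots,n\}\subset\mathbb{Z}$. A permutation $\tau$ of $V$ gives insertion times: vertex $x$ is inserted at time $\tau(x)$. The undirected graph $G_n$ on $V$ is built as follows: start with no edges; for $t=1,\dots,n$, let $x$ be the vertex with $\tau(x)=t$; if some $y<x$ with $\tau(y)<t$ exists, add an edge between $x$ and the largest such $y$; if some $y>x$ with $\tau(y)<t$ exists, add an edge between $x$ and the smallest such $y$. The greedy walk toward target $n$ starts at $x_0=1$ and, from the current vertex $x\ne n$, moves to the neighbor $y$ of $x$ minimizing $|y-n|$, stopping at $n$; $S_n$ is its number of moves. *)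

(* Defs.v *)
From HB Require Import structures.
From mathcomp Require Import all_boot all_order all_algebra all_fingroup.
From mathcomp Require Import all_classical all_reals all_analysis.
Set Implicit Arguments. Unset Strict Implicit. Unset Printing Implicit Defensive.
Import Order.TTheory GRing.Theory Num.Theory.

(* Vertices 1..n are represented 0-based by 'I_n (vertex i+1 <-> ordinal i).
   A permutation s : 'S_n gives insertion times: vertex x inserted at time s x
   (0-based). *)

Definition lower_link n (s : 'S_n) (x y : 'I_n) : bool :=
  [&& (y < x)%N, (s y < s x)%N &
      [forall z : 'I_n, ((y < z)%N && (z < x)%N) ==> ~~ (s z < s x)%N]].

Definition upper_link n (s : 'S_n) (x y : 'I_n) : bool :=
  [&& (x < y)%N, (s y < s x)%N &
      [forall z : 'I_n, ((x < z)%N && (z < y)%N) ==> ~~ (s z < s x)%N]].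

(* undirected adjacency in G_n: the edge {x,y} is added when the later of the
   two is inserted and the earlier one is its lower/upper link *)
Definition adj n (s : 'S_n) (x y : 'I_n) : bool :=
  [|| lower_link s x y, upper_link s x y, lower_link s y x | upper_link s y x].

Definition adjn n (s : 'S_n) (a b : nat) : bool :=
  [exists x : 'I_n, exists y : 'I_n,
     [&& (x == a :> nat), (y == b :> nat) & adj s x y]].

(* greedy step toward the target n.-1 (= vertex n): the neighbour y minimising
   |y - target| = target - y, i.e. the largest neighbour *)
Definition greedy_next n (s : 'S_n) (a : nat) : nat :=
  \max_(y < n | adjn s a y) (y : nat).

Fixpoint walk_steps n (s : 'S_n) (fuel a : nat) : nat :=
  if a == n.-1 then 0%N else
  match fuel with
  | 0 => 0%N
  | f.+1 => (walk_steps s f (greedy_next s a)).+1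
  end.

(* S_n : greedy walk from vertex 1 (label 0) to vertex n (label n-1);
   the walk strictly increases so n steps of fuel suffice *)
Definition greedy_steps n (s : 'S_n) : nat := walk_steps s n 0.

Definition prob_window (R : realType) (eps : R) (n : nat) : R :=
  (#|[set s : 'S_n | ((2 - eps) * ln (n%:R : R) <= (greedy_steps s)%:R)%R
                     && ((greedy_steps s)%:R <= (2 + eps) * ln (n%:R : R))%R]|%:R
   / #|[set: 'S_n]|%:R)%R.

(* Main.v *)
Require Import Defs.
From HB Require Import structures.
From mathcomp Require Import all_boot all_order all_algebra all_fingroup.
From mathcomp Require Import all_classical all_reals all_analysis.
From mathcomp Require Import zify ring lra.
Import Order.TTheory GRing.Theory Num.Theory numFieldNormedType.Exports.
Set Implicit Arguments. Unset Strict Implicit. Unset Printing Implicit Defensive.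

Section Comb.
Variables (n : nat) (s : 'S_n).

Lemma sinj (x y : 'I_n) : (s x == s y :> nat) = (x == y).
Proof. by apply/eqP/eqP => [/val_inj/perm_inj|->]. Qed.

Lemma adj_lt (x y : 'I_n) : (x < y)%N ->
  adj s x y <-> (forall z : 'I_n, (x < z < y)%N -> (maxn (s x) (s y) < s z)%N).
Proof.
move=> xy; rewrite /adj /lower_link /upper_link.
have -> : (y < x)%N = false by lia.
rewrite xy /= orbF.
have sne : (s x != s y :> nat) by rewrite sinj; apply/eqP => e; move: xy; rewrite e ltnn.
split.
- case/orP => /andP [H1 /forall_inP H2] z /andP [z1 z2].
  + have := H2 z; rewrite z1 z2 /= => /(_ isT); rewrite -leqNgt => H.
    have : (s z != s x :> nat) by rewrite sinj; apply/eqP => e; move: z1; rewrite e ltnn.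
    move=> H'. rewrite gtn_max; apply/andP; split; lia.
  + have := H2 z; rewrite z1 z2 /= => /(_ isT); rewrite -leqNgt => H.
    have : (s z != s y :> nat) by rewrite sinj; apply/eqP => e; move: z2; rewrite e ltnn.
    move=> H'. rewrite gtn_max; apply/andP; split; lia.
- move=> H.
  case: (ltngtP (s x) (s y)) => c; last by move: sne; rewrite c eqxx.
  + apply/orP; right; apply/andP; split => //; apply/forall_inP => z /andP [z1 z2].
    have := H z; rewrite z1 z2 => /(_ isT); lia.
  + apply/orP; left; apply/andP; split => //; apply/forall_inP => z /andP [z1 z2].
    have := H z; rewrite z1 z2 => /(_ isT); lia.
Qed.

Lemma adjnE (a y : 'I_n) : adjn s a y = adj s a y.
Proof.
apply/existsP/idP => [[x /existsP [z /and3P [/eqP/val_inj -> /eqP/val_inj -> //]]]|H].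
by exists a; apply/existsP; exists y; rewrite !eqxx.
Qed.

Lemma greedy_spec (a : 'I_n) : (a.+1 < n)%N ->
  exists b : 'I_n, [/\ greedy_next s a = b, (a < b)%N, adj s a b &
     forall y : 'I_n, (b < y)%N -> ~~ adj s a y].
Proof.
move=> an.
set A := [pred y : 'I_n | adjn s a y].
have a1 : adj s a (Ordinal an).
  by apply/adj_lt => //= z; lia.
have cA : (0 < #|A|)%N.
  by apply/card_gt0P; exists (Ordinal an); rewrite inE adjnE.
have [b bA bE] := eq_bigmax_cond (fun y : 'I_n => val y) cA.
exists b; rewrite /greedy_next; split.
- exact: bE.
- have := @leq_bigmax_cond _ A (fun y : 'I_n => val y) (Ordinal an).
  rewrite inE adjnE => /(_ a1); rewrite bE /=; lia.
- by move: bA; rewrite inE adjnE.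
- move=> y yb; apply/negP => ay.
  have := @leq_bigmax_cond _ A (fun y : 'I_n => val y) y.
  rewrite inE adjnE => /(_ ay); rewrite bE /=; lia.
Qed.

Lemma neq_lt (i a : 'I_n) : (a <= i)%N -> i != a -> (a < i)%N.
Proof. by move=> ai ia; rewrite ltn_neqAle ai andbT eq_sym (inj_eq val_inj). Qed.

Definition LRs (a : nat) := [set i : 'I_n | (a <= i)%N &&
   [forall k : 'I_n, ((a <= k)%N && (k < i)%N) ==> (s i < s k)%N]].
Definition RRs (a : nat) := [set i : 'I_n | (a <= i)%N &&
   [forall k : 'I_n, (i < k)%N ==> (s i < s k)%N]].
Definition Phi a := (#|LRs a| + #|RRs a|)%N.

Lemma card_add1 (A B : {set 'I_n}) (a : 'I_n) :
  (forall i, (i \in A) = (i == a) || (i \in B)) -> a \notin B -> #|A| = #|B|.+1.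
Proof.
move=> H aB; have -> : A = a |: B by apply/setP => i; rewrite !inE H.
by rewrite cardsU1 aB.
Qed.

Lemma phi_step (a : 'I_n) : (a.+1 < n)%N -> (Phi (greedy_next s a)).+1 = Phi a.
Proof.
move=> an; have [b [-> ab adjab bmax]] := greedy_spec an.
have hz0 := (iffLR (adj_lt ab) adjab).
rewrite /Phi.
case: (ltnP (s b) (s a)) => c.
-
  have hz : forall z : 'I_n, (a < z < b)%N -> (s a < s z)%N.
    move=> z /hz0; lia.
  rewrite (@card_add1 (LRs a) (LRs b) a); first last.
  + by rewrite inE negb_and -ltnNge ab.
  + move=> i; rewrite !inE; apply/idP/idP.
    * case/andP => ai /forall_inP Hf.
      case: (eqVneq i a) => //= ia.
      have ai' := neq_lt ai ia.
      case: (ltnP i b) => bi.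
        have := hz i; rewrite ai' bi => /(_ isT).
        have := Hf a; rewrite leqnn ai' => /(_ isT); lia.
      rewrite /=; apply/forall_inP => k /andP [bk ki]; apply: Hf; lia.
    * case/orP => [/eqP ->|/andP [bi /forall_inP Hf]].
        by rewrite leqnn /=; apply/forall_inP => k; lia.
      have sib : (s i <= s b)%N.
        case: (eqVneq i b) => [->//|ib].
        have ib' := neq_lt bi ib.
        have := Hf b; rewrite leqnn ib' => /(_ isT); lia.
      have -> /= : (a <= i)%N by lia.
      apply/forall_inP => k /andP [ak ki].
      case: (leqP b k) => bk; first by apply: Hf; rewrite bk.
      case: (eqVneq k a) => [->|ka]; first by lia.
      have ka' := neq_lt ak ka.
      have := hz k; rewrite ka' bk => /(_ isT); lia.
  have -> : RRs a = RRs b.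
    apply/setP => i; rewrite !inE; apply/idP/idP.
    * case/andP => ai /forall_inP Hf.
      case: (ltnP i b) => bi; last by rewrite /=; apply/forall_inP.
      have := Hf b bi.
      case: (eqVneq i a) => [->|ia]; first by lia.
      have ai' := neq_lt ai ia.
      have := hz i; rewrite ai' bi => /(_ isT); lia.
    * case/andP => bi Hf; rewrite Hf andbT; lia.
  by rewrite addSn.
-
  have {}c : (s a < s b)%N.
    rewrite ltn_neqAle c andbT eq_sym sinj; apply/eqP => e; move: ab; rewrite e ltnn //.
  have hz : forall z : 'I_n, (a < z < b)%N -> (s b < s z)%N.
    move=> z /hz0; lia.
  have hy : forall y : 'I_n, (b < y)%N -> (s b < s y)%N.
    move=> y0 by0; rewrite ltnNge leq_eqVlt sinj negb_or; apply/andP; split.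
      by apply/eqP => e; move: by0; rewrite e ltnn.
    apply/negP => sy0.
    pose P := [pred y : 'I_n | (b < y)%N && (s y < s b)%N].
    have Py0 : P y0 by rewrite inE by0.
    case: (arg_minnP (fun y : 'I_n => val y) Py0) => y /andP [byy sy] ymin.
    have ay : (a < y)%N by lia.
    apply: (negP (bmax y byy)); apply/(adj_lt ay).
    move=> z /andP [az zy].
    case: (ltngtP z b) => zb.
    + have := hz z; rewrite az zb => /(_ isT); lia.
    + have : (s b <= s z)%N.
        rewrite leqNgt; apply/negP => szb.
        have := ymin z; rewrite inE zb szb => /(_ isT) /=; lia.
      rewrite leq_eqVlt sinj; case: (eqVneq b z) => [e|_] /=.
        by move: zb; rewrite e ltnn.
      lia.
    + have -> : z = b by apply/val_inj.
      lia.
  have hs : forall z : 'I_n, (a < z)%N -> (s a < s z)%N.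
    move=> z az; case: (ltngtP z b) => zb.
    + have := hz z; rewrite az zb => /(_ isT); lia.
    + have := hy z zb; lia.
    + by have -> : z = b by apply/val_inj.
  have L1 : forall x : 'I_n, (forall z : 'I_n, (x < z)%N -> (s x < s z)%N) ->
       #|LRs x| = 1%N.
    move=> x Hx; rewrite -(cards1 x); apply: eq_card => i; rewrite !inE.
    apply/idP/idP.
    * case/andP => xi /forall_inP Hf; case: (eqVneq i x) => // ix.
      have xi' := neq_lt xi ix.
      have := Hf x; rewrite leqnn xi' => /(_ isT).
      have := Hx i xi'; lia.
    * move/eqP => ->; rewrite leqnn /=; apply/forall_inP => k; lia.
  rewrite (L1 a hs) (L1 b hy).
  rewrite (@card_add1 (RRs a) (RRs b) a); first last.
  + by rewrite inE negb_and -ltnNge ab.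
  + move=> i; rewrite !inE; apply/idP/idP.
    * case/andP => ai /forall_inP Hf.
      case: (eqVneq i a) => //= ia.
      have ai' := neq_lt ai ia.
      case: (ltnP i b) => bi; last by rewrite /=; apply/forall_inP.
      have := Hf b bi.
      have := hz i; rewrite ai' bi => /(_ isT); lia.
    * case/orP => [/eqP ->|/andP [bi Hf]].
        by rewrite leqnn /=; apply/forall_inP => k; apply: hs.
      rewrite Hf andbT; lia.
  by rewrite addnS.
Qed.

Lemma phi_ge2 (a : 'I_n) : (2 <= Phi a)%N.
Proof.
have ha := ltn_ord a.
have ln : (n.-1 < n)%N by lia.
rewrite /Phi; have h1 : (0 < #|LRs a|)%N.
  apply/card_gt0P; exists a; rewrite inE leqnn /=; apply/forall_inP => k; lia.
have h2 : (0 < #|RRs a|)%N.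
  apply/card_gt0P; exists (Ordinal ln); rewrite inE /=.
  have -> /= : (a <= n.-1)%N by lia.
  apply/forall_inP => k /=; have := ltn_ord k; lia.
lia.
Qed.

Lemma phi_last (a : 'I_n) : (a : nat) = n.-1 -> Phi a = 2%N.
Proof.
move=> e; have ha := ltn_ord a.
have E : forall i : 'I_n, (a <= i)%N = (i == a).
  move=> i; have hi := ltn_ord i.
  apply/idP/eqP => [h|->]; last by rewrite leqnn.
  apply/val_inj => /=; lia.
rewrite /Phi; suff [-> ->] : #|LRs a| = 1%N /\ #|RRs a| = 1%N by [].
split; rewrite -(cards1 a); apply: eq_card => i; rewrite !inE E;
  case: eqVneq => [->|] //=; apply/forall_inP => k; have := ltn_ord k; lia.
Qed.

Lemma walk_phi f (a : 'I_n) : (n.-1 - a <= f)%N -> walk_steps s f a = (Phi a).-2.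
Proof.
elim: f a => [|f IH] a hf.
  have ha := ltn_ord a.
  have e : (a : nat) = n.-1 by lia.
  by rewrite /= (phi_last e) e eqxx.
rewrite /=; case: (eqVneq (a : nat) n.-1) => [e|ne]; first by rewrite (phi_last e).
have ha := ltn_ord a.
have an : (a.+1 < n)%N by move/eqP: ne; lia.
have [b [gb ab _ _]] := greedy_spec an.
rewrite -(phi_step an) gb IH; last by lia.
have := phi_ge2 b; case: (Phi b) => [|[|k]] //.
Qed.

Lemma greedy_phi (a0 : 'I_n) : (a0 : nat) = 0%N -> greedy_steps s = (Phi 0).-2.
Proof. move=> e; rewrite /greedy_steps -e walk_phi //; lia. Qed.
End Comb.

Section Count.
Variables (n : nat) (W : {set 'I_n}) (Q : pred 'S_n).
Hypothesis HQ : forall x y s, x \in W -> y \in W -> Q s -> Q (tperm x y * s)%g.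

Definition M (s : 'S_n) x := [forall k in W, (k != x) ==> (s x < s k)%N].

Lemma M_tperm x y s : x \in W -> y \in W -> M s y -> M (tperm x y * s)%g x.
Proof.
move=> xW yW /forall_inP H; apply/forall_inP => k kW; apply/implyP => kx.
rewrite !permM tpermL.
have tk : tperm x y k \in W by case: tpermP.
have ty : tperm x y k != y.
  by rewrite -{2}(tpermL x y) (inj_eq perm_inj).
exact: (implyP (H _ tk) ty).
Qed.

Lemma leq_cardM x y : x \in W -> y \in W ->
  (#|[set s | Q s && M s x]| <= #|[set s | Q s && M s y]|)%N.
Proof.
move=> xW yW.
rewrite -(card_imset _ (mulgI (tperm y x))).
apply: (@subset_leq_card _ _ [set s | Q s && M s y]).
apply/fintype.subsetP => z /imsetP [s + ->].
rewrite !inE => /andP [qs ms].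
by rewrite HQ // M_tperm.
Qed.

Lemma sumM s : (\sum_(x in W) (M s x : nat) <= 1)%N.
Proof.
case: (pickP [pred x | (x \in W) && M s x]) => [m /andP [mW mM]|none].
  rewrite (bigD1 m) //= mM big1 // => x /andP [xW xm].
  apply/eqP; rewrite eqb0; apply/negP => xM.
  move/forall_inP: mM => /(_ x xW) /implyP /(_ xm).
  move/forall_inP: xM => /(_ m mW) /implyP /(_ _) .
  rewrite eq_sym xm => /(_ isT); lia.
by rewrite big1 // => x xW; have := none x; rewrite /= xW /= => ->.
Qed.

Lemma sumM1 s i : i \in W -> \sum_(x in W) (M s x : nat) = 1%N.
Proof.
move=> iW; apply/eqP; rewrite eqn_leq sumM /=.
pose m := [arg min_(x < i in W) (s x : nat)].
have : M s m.
  rewrite /m; case: arg_minnP => // x xW xmin.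
  apply/forall_inP => k kW; apply/implyP => kx.
  have := xmin k kW; rewrite leq_eqVlt => /orP [|//].
  by rewrite sinj eq_sym (negbTE kx).
have mW : m \in W by rewrite /m; case: arg_minnP.
by move=> mM; rewrite (bigD1 m) //= mM.
Qed.

Lemma count_M i : i \in W ->
  (#|[set s | Q s && M s i]| * #|W|)%N = #|[set s | Q s]|.
Proof.
move=> iW.
have E : forall x, x \in W -> #|[set s | Q s && M s x]| = #|[set s | Q s && M s i]|.
  by move=> x xW; apply/eqP; rewrite eqn_leq !leq_cardM.
rewrite mulnC -sum_nat_const -(eq_bigr _ E) /=.
rewrite -sum1dep_card.
under eq_bigr => x _ do rewrite -sum1dep_card big_mkcond /=.
rewrite exchange_big /= [RHS]big_mkcond /=; apply: eq_bigr => s _.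
case: (Q s) => /=; last by rewrite big1.
by rewrite -[RHS](sumM1 s iW); apply: eq_bigr => x _; case: (M s x).
Qed.
End Count.

Lemma card_lt (n m : nat) : (m <= n)%N -> #|[set k : 'I_n | (k < m)%N]| = m.
Proof.
move=> mn; rewrite -sum1dep_card big_mkcond /=.
rewrite -(big_mkord xpredT (fun k => if (k < m)%N then 1%N else 0%N)).
rewrite (big_cat_nat (leq0n m) mn) /=.
have -> : (\sum_(m <= k < n) (if (k < m)%N then 1%N else 0%N) = 0)%N.
  rewrite big_nat_cond big1 // => k /andP [/andP [mk _] _]; by rewrite ltnNge mk.
have -> : (\sum_(0 <= k < m) (if (k < m)%N then 1%N else 0%N) = m)%N.
  rewrite big_nat_cond (eq_bigr (fun _ => 1%N)); last first.
    by move=> k /andP [/andP [_ ->] _].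
  by rewrite -big_nat_cond sum_nat_const_nat subn0 muln1.
by rewrite addn0.
Qed.

Lemma card_le (n : nat) (i : 'I_n) : #|[set k : 'I_n | (k <= i)%N]| = i.+1.
Proof. exact: card_lt (ltn_ord i). Qed.

Lemma card_ge (n : nat) (i : 'I_n) : #|[set k : 'I_n | (i <= k)%N]| = (n - i)%N.
Proof.
have -> : [set k : 'I_n | (i <= k)%N] = ~: [set k : 'I_n | (k < i)%N].
  by apply/setP => k; rewrite !inE -leqNgt.
by rewrite cardsCs finset.setCK card_ord card_lt // ltnW.
Qed.

Definition Lm n (s : 'S_n) (i : 'I_n) := [forall k : 'I_n, (k < i)%N ==> (s i < s k)%N].
Definition Rm n (s : 'S_n) (i : 'I_n) := [forall k : 'I_n, (i < k)%N ==> (s i < s k)%N].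

Lemma ord_neq n (k i : 'I_n) : (k < i)%N -> k != i.
Proof. by move=> ki; apply/eqP => e; move: ki; rewrite e ltnn. Qed.

Lemma negbTE_sym n (a b : 'I_n) : a != b -> b != a.
Proof. by rewrite eq_sym. Qed.

Lemma ord_lt n (k i : 'I_n) : (k <= i)%N -> k != i -> (k < i)%N.
Proof.
move=> ki kne; rewrite ltn_neqAle ki andbT.
by move: kne; apply: contra => /eqP e; apply/eqP/val_inj.
Qed.

Lemma M_Lm n (i : 'I_n) s : M [set k : 'I_n | (k <= i)%N] s i = Lm s i.
Proof.
apply/forall_inP/forallP => H k.
  apply/implyP => ki; move: (H k); rewrite inE (ltnW ki) (ord_neq ki) /=.
  by move=> /(_ isT).
rewrite inE => ki; apply/implyP => kne.
by move/implyP: (H k) => /(_ (ord_lt ki kne)).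
Qed.

Lemma M_Rm n (i : 'I_n) s : M [set k : 'I_n | (i <= k)%N] s i = Rm s i.
Proof.
apply/forall_inP/forallP => H k.
  apply/implyP => ki; move: (H k); rewrite inE (ltnW ki) eq_sym (ord_neq ki) /=.
  by move=> /(_ isT).
rewrite inE => ki; apply/implyP => kne.
by move/implyP: (H k) => /(_ (ord_lt ki (negbTE_sym kne))).
Qed.

Lemma cntL1 n (i : 'I_n) : (#|[set s : 'S_n | Lm s i]| * i.+1)%N = #|'S_n|.
Proof.
have := @count_M n [set k : 'I_n | (k <= i)%N] predT (fun _ _ _ _ _ _ => isT) i.
rewrite inE leqnn card_le => /(_ isT).
have -> : [set s | predT s && M [set k : 'I_n | (k <= i)%N] s i] = [set s | Lm s i].
  by apply/setP => s; rewrite !inE M_Lm.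
by move=> ->; rewrite -cardsT; congr #|_|; apply/setP => s; rewrite !inE.
Qed.

Lemma cntR1 n (i : 'I_n) : (#|[set s : 'S_n | Rm s i]| * (n - i))%N = #|'S_n|.
Proof.
have := @count_M n [set k : 'I_n | (i <= k)%N] predT (fun _ _ _ _ _ _ => isT) i.
rewrite inE leqnn card_ge => /(_ isT).
have -> : [set s | predT s && M [set k : 'I_n | (i <= k)%N] s i] = [set s | Rm s i].
  by apply/setP => s; rewrite !inE M_Rm.
by move=> ->; rewrite -cardsT; congr #|_|; apply/setP => s; rewrite !inE.
Qed.

Lemma cntL2 n (i j : 'I_n) : (i < j)%N ->
  (#|[set s : 'S_n | Lm s j && Lm s i]| * i.+1)%N = #|[set s : 'S_n | Lm s j]|.
Proof.
move=> ij.
have HQ : forall x y s, x \in [set k : 'I_n | (k <= i)%N] ->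
    y \in [set k : 'I_n | (k <= i)%N] -> Lm s j -> Lm (tperm x y * s)%g j.
  move=> x y s; rewrite !inE => xi yi /forallP H; apply/forallP => k.
  apply/implyP => kj; rewrite !permM.
  have -> : tperm x y j = j.
    by apply/tpermD; apply/eqP => /(congr1 val) /= e; lia.
  have := H (tperm x y k); apply: implyP; case: tpermP => //; lia.
have := @count_M n [set k : 'I_n | (k <= i)%N] (fun s => Lm s j) HQ i.
rewrite inE leqnn card_le => /(_ isT).
have -> : [set s | Lm s j && M [set k : 'I_n | (k <= i)%N] s i] =
   [set s | Lm s j && Lm s i].
  by apply/setP => s; rewrite !inE M_Lm.
by [].
Qed.

Lemma cntR2 n (i j : 'I_n) : (i < j)%N ->
  (#|[set s : 'S_n | Rm s i && Rm s j]| * (n - j))%N = #|[set s : 'S_n | Rm s i]|.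
Proof.
move=> ij.
have HQ : forall x y s, x \in [set k : 'I_n | (j <= k)%N] ->
    y \in [set k : 'I_n | (j <= k)%N] -> Rm s i -> Rm (tperm x y * s)%g i.
  move=> x y s; rewrite !inE => xi yi /forallP H; apply/forallP => k.
  apply/implyP => kj; rewrite !permM.
  have -> : tperm x y i = i.
    by apply/tpermD; apply/eqP => /(congr1 val) /= e; lia.
  have := H (tperm x y k); apply: implyP; case: tpermP => //; lia.
have := @count_M n [set k : 'I_n | (j <= k)%N] (fun s => Rm s i) HQ j.
rewrite inE leqnn card_ge => /(_ isT).
have -> : [set s | Rm s i && M [set k : 'I_n | (j <= k)%N] s j] =
   [set s | Rm s i && Rm s j].
  by apply/setP => s; rewrite !inE M_Rm.
by [].
Qed.

Section Real.
Import Order.TTheory GRing.Theory Num.Theory.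
Local Open Scope ring_scope.
Lemma sum_cst (R : comRingType) (T : finType) (c : R) : \sum_(s : T) c = #|T|%:R * c.
Proof. by rewrite sumr_const mulr_natl. Qed.

Lemma var_ind (R : comRingType) (T : finType) (m : nat) (E : 'I_m -> pred T)
  (p : 'I_m -> R) :
  (forall i, \sum_(s : T) ((E i s : nat)%:R : R) = #|T|%:R * p i) ->
  (forall i j, i != j ->
     \sum_(s : T) ((E i s && E j s : nat)%:R : R) = #|T|%:R * (p i * p j)) ->
  \sum_(s : T) (\sum_(i < m) ((E i s : nat)%:R : R) - \sum_(i < m) p i) ^+ 2
   = #|T|%:R * \sum_(i < m) (p i * (1 - p i)).
Proof.
move=> H1 H2.
have key : forall i j, \sum_(s : T) (((E i s : nat)%:R - p i) * ((E j s : nat)%:R - p j))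
   = if i == j then #|T|%:R * (p i * (1 - p i)) else 0.
  move=> i j.
  have E1 : forall s, ((E i s : nat)%:R - p i) * ((E j s : nat)%:R - p j) =
     (E i s && E j s : nat)%:R - (E i s : nat)%:R * p j - p i * (E j s : nat)%:R
       + p i * p j.
    by move=> s; case: (E i s); case: (E j s); rewrite /= ?mul0r ?mulr0 ?mul1r ?mulr1;
       ring.
  rewrite (eq_bigr _ (fun s _ => E1 s)) !big_split /= !sumrN.
  rewrite -mulr_suml -mulr_sumr sum_cst H1 H1.
  case: eqVneq => [<-|ne].
    have -> : \sum_(s : T) ((E i s && E i s : nat)%:R : R) = #|T|%:R * p i.
      by rewrite -H1; apply: eq_bigr => s _; rewrite andbb.
    ring.
  rewrite H2 //; ring.
under eq_bigr => s _ do rewrite -sumrB expr2 mulr_suml.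
under eq_bigr => s _ do under eq_bigr => i _ do rewrite mulr_sumr.
rewrite exchange_big /=.
under eq_bigr => i _ do rewrite exchange_big /=.
under eq_bigr => i _ do under eq_bigr => j _ do rewrite key.
rewrite mulr_sumr; apply: eq_bigr => i _.
rewrite (bigD1 i) //= eqxx big1 ?addr0 // => j /negPf.
by rewrite eq_sym => ->.
Qed.

Variables (R : realType) (n : nat).

Definition Lsum (s : 'S_n) : R := \sum_(i < n) ((Lm s i : nat)%:R).
Definition Rsum (s : 'S_n) : R := \sum_(i < n) ((Rm s i : nat)%:R).
Definition Hn : R := \sum_(i < n) (i.+1%:R)^-1.

Lemma sum_ind (P : pred 'S_n) : \sum_(s : 'S_n) ((P s : nat)%:R : R) = #|[set s | P s]|%:R.
Proof.
rewrite -sum1dep_card natr_sum [RHS]big_mkcond /=; apply: eq_bigr => s _.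
by case: (P s).
Qed.

Lemma pairL (i j : 'I_n) : (i < j)%N ->
  \sum_(s : 'S_n) ((Lm s i && Lm s j : nat)%:R : R) =
  #|'S_n|%:R * ((i.+1%:R)^-1 * (j.+1%:R)^-1).
Proof.
move=> ij; rewrite sum_ind.
have e1 := cntL2 ij; have e2 := cntL1 j.
have -> : [set s | Lm s i && Lm s j] = [set s | Lm s j && Lm s i].
  by apply/setP => s; rewrite !inE andbC.
rewrite -e2 -e1 !natrM; field.
by rewrite ![1 + _]addrC !natr1 !pnatr_eq0.
Qed.

Lemma pairR (i j : 'I_n) : (i < j)%N ->
  \sum_(s : 'S_n) ((Rm s i && Rm s j : nat)%:R : R) =
  #|'S_n|%:R * (((n - i)%:R)^-1 * ((n - j)%:R)^-1).
Proof.
move=> ij; rewrite sum_ind.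
have e1 := cntR2 ij; have e2 := cntR1 i.
have hi : (0 < n - i)%N by have := ltn_ord i; lia.
have hj : (0 < n - j)%N by have := ltn_ord j; lia.
rewrite -e2 -e1 !natrM; field.
by rewrite !pnatr_eq0 -!lt0n hi hj.
Qed.

Lemma le_var (T : finType) (m : nat) (p : 'I_m -> R) :
  (forall i, 0 <= p i) ->
  #|T|%:R * \sum_(i < m) (p i * (1 - p i)) <= #|T|%:R * \sum_(i < m) p i.
Proof.
move=> hp; apply: ler_wpM2l => //; apply: ler_sum => i _.
have := hp i; nra.
Qed.

Lemma varL : \sum_(s : 'S_n) (Lsum s - Hn) ^+ 2 <= #|'S_n|%:R * Hn.
Proof.
rewrite /Lsum /Hn (@var_ind R _ n (fun i s => Lm s i) (fun i => (i.+1%:R)^-1)).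
- by apply: le_var => i; rewrite invr_ge0.
- move=> i; rewrite sum_ind -(cntL1 i) natrM mulfK //.
- move=> i j ij; case: (ltngtP i j) => c.
  + exact: pairL.
  + have -> : \sum_(s : 'S_n) ((Lm s i && Lm s j : nat)%:R : R) =
        \sum_(s : 'S_n) ((Lm s j && Lm s i : nat)%:R : R).
      by apply: eq_bigr => s _; rewrite andbC.
    by rewrite pairL // [_^-1 * _^-1]mulrC.
  + by move: ij; rewrite (val_inj c) eqxx.
Qed.

Lemma HnR : \sum_(i < n) ((n - i)%:R)^-1 = Hn.
Proof.
rewrite /Hn (reindex_inj rev_ord_inj) /=; apply: eq_bigr => i _.
have := ltn_ord i; move=> hi; congr (_%:R^-1); lia.
Qed.

Lemma varR : \sum_(s : 'S_n) (Rsum s - Hn) ^+ 2 <= #|'S_n|%:R * Hn.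
Proof.
rewrite -HnR /Rsum (@var_ind R _ n (fun i s => Rm s i) (fun i => ((n - i)%:R)^-1)).
- by apply: le_var => i; rewrite invr_ge0.
- move=> i; rewrite sum_ind -(cntR1 i) natrM mulfK //.
  by rewrite pnatr_eq0; have := ltn_ord i; lia.
- move=> i j ij; case: (ltngtP i j) => c.
  + exact: pairR.
  + have -> : \sum_(s : 'S_n) ((Rm s i && Rm s j : nat)%:R : R) =
        \sum_(s : 'S_n) ((Rm s j && Rm s i : nat)%:R : R).
      by apply: eq_bigr => s _; rewrite andbC.
    by rewrite pairR // [_^-1 * _^-1]mulrC.
  + by move: ij; rewrite (val_inj c) eqxx.
Qed.
End Real.

Local Open Scope ring_scope.

Lemma ln_step (R : realType) (a : R) : 0 < a ->
  (a + 1)^-1 <= ln (a + 1) - ln a <= a^-1.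
Proof.
move=> a0.
have ai : 0 < a^-1 by rewrite invr_gt0.
have a1 : 0 < a + 1 by lra.
have a1i : 0 < (a + 1)^-1 by rewrite invr_gt0.
have h1 : ln (a + 1) = ln a + ln (1 + a^-1).
  rewrite -lnM ?posrE; last 2 first; [lra|lra|].
  by congr ln; field; rewrite gt_eqF.
have h2 : ln (1 + a^-1) = - ln (1 + - (a + 1)^-1).
  rewrite -lnV ?posrE; last first.
    have : (a + 1)^-1 < 1.
      by rewrite invf_lt1 //; lra.
    lra.
  congr ln; field; apply/andP; split; rewrite ?gt_eqF //; lra.
rewrite h1 (addrC (ln a)) addrK; apply/andP; split.
- rewrite h2; have := @le_ln1Dx R (- (a + 1)^-1).
  have : (a + 1)^-1 < 1 by rewrite invf_lt1 //; lra.
  move=> h /(_ ltac:(lra)); lra.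
- by apply: le_ln1Dx; lra.
Qed.

Lemma Hn_S (R : realType) m : Hn R m.+1 = Hn R m + (m.+1%:R)^-1.
Proof. by rewrite /Hn big_ord_recr. Qed.

Lemma Hn_lower (R : realType) m : ln (m.+1%:R : R) <= Hn R m.
Proof.
elim: m => [|m IH]; first by rewrite /Hn big_ord0 ln1.
have a0 : (0 : R) < m.+1%:R by rewrite ltr0n.
have := ln_step a0; rewrite natr1 Hn_S => /andP [_ h].
move: (ln (m.+2%:R : R)) (ln (m.+1%:R : R)) (Hn R m) ((m.+1%:R : R)^-1) IH h => x y z w; lra.
Qed.

Lemma Hn_upper (R : realType) m : Hn R m.+1 <= 1 + ln (m.+1%:R : R).
Proof.
elim: m => [|m IH]; first by rewrite Hn_S /Hn big_ord0 ln1 invr1; lra.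
have a0 : (0 : R) < m.+1%:R by rewrite ltr0n.
have := ln_step a0; rewrite natr1 (Hn_S _ m.+1) => /andP [h _].
move: (ln (m.+2%:R : R)) (ln (m.+1%:R : R)) (Hn R m.+1) ((m.+2%:R : R)^-1) IH h => x y z w; lra.
Qed.

Lemma Hn_bounds (R : realType) n : (0 < n)%N ->
  ln (n%:R : R) <= Hn R n <= 1 + ln (n%:R : R).
Proof.
case: n => [//|m] _; apply/andP; split; last exact: Hn_upper.
apply: le_trans (Hn_lower R m.+1).
rewrite ler_ln ?posrE ?ltr0n // ler_nat; lia.
Qed.

Lemma card_sum n (P : pred 'I_n) : #|[set i | P i]| = (\sum_(i < n) (P i : nat))%N.
Proof. by rewrite -sum1dep_card big_mkcond /=; apply: eq_bigr => i _; case: (P i). Qed.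

Lemma steps_sum (R : realType) n (s : 'S_n) : (0 < n)%N ->
  (greedy_steps s)%:R + 2 = Lsum R s + Rsum R s.
Proof.
move=> n0; pose a0 : 'I_n := Ordinal n0.
rewrite (greedy_phi s (a0 := a0)) //.
have := phi_ge2 s a0; rewrite /= /Phi.
have -> : LRs s 0 = [set i | Lm s i].
  by apply/setP => i; rewrite !inE.
have -> : RRs s 0 = [set i | Rm s i].
  by apply/setP => i; rewrite !inE.
rewrite !card_sum /Lsum /Rsum => h.
rewrite -!natr_sum -natrD -natrD; congr (_%:R).
match goal with |- ((?x + ?y).-2 + 2)%N = (?z + ?w)%N =>
  have -> : z = x by [] end.
match goal with |- ((?x + ?y).-2 + 2)%N = (?x + ?w)%N =>
  have -> : w = y by [] end.
lia.
Qed.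

Lemma varX (R : realType) n :
  \sum_(s : 'S_n) (Lsum R s + Rsum R s - 2 * Hn R n) ^+ 2 <= 4 * (#|'S_n|%:R * Hn R n).
Proof.
apply: le_trans (_ : \sum_(s : 'S_n) (2 * (Lsum R s - Hn R n) ^+ 2 +
   2 * (Rsum R s - Hn R n) ^+ 2) <= _).
  apply: ler_sum => s _.
  move: (Lsum R s) (Rsum R s) (Hn R n) => a b h; have := sqr_ge0 (a - b); nra.
rewrite big_split /= -!mulr_sumr.
have := varL R n; have := varR R n; lra.
Qed.

Lemma bound (R : realType) (eps : R) n : (0 < n)%N -> 0 < eps ->
  1 <= ln (n%:R : R) -> 4 <= eps * ln (n%:R : R) ->
  0 <= 1 - prob_window eps n <= 32 / (eps ^+ 2 * ln (n%:R : R)).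
Proof.
move=> n0 e0 l1 l4.
have hH := Hn_bounds R n0.
rewrite /prob_window.
set l := ln (n%:R : R) in l1 l4 hH *.
set G := [set s : 'S_n | _].
set N : R := #|[set: 'S_n]|%:R.
have N0 : 0 < N by rewrite /N ltr0n; apply/card_gt0P; exists 1%g.
have cG : (#|G| + #|~: G| = #|[set: 'S_n]|)%N by rewrite cardsC cardsT.
have eN : N = #|G|%:R + #|~: G|%:R by rewrite /N -cG natrD.
have one : 1 - #|G|%:R / N = #|~: G|%:R / N.
  rewrite eN; field; rewrite -eN gt_eqF //.
rewrite one.
set B : R := #|~: G|%:R.
have B0 : 0 <= B by rewrite /B ler0n.
set t := eps * l - 2.
pose f := fun s : 'S_n => (Lsum R s + Rsum R s - 2 * Hn R n) ^+ 2.
have hbad : forall s, s \in ~: G -> t ^+ 2 <= f s.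
  move=> s sB; case: (leP (t ^+ 2) (f s)) => // lt; exfalso.
  move: sB; rewrite finset.in_setC inE => /negP; apply.
  have hS := steps_sum R s n0.
  rewrite /f in lt.
  move: hH => /andP [hH1 hH2].
  have t0 : 0 < t by rewrite /t; lra.
  have dl : Lsum R s + Rsum R s - 2 * Hn R n < t by nra.
  have dr : - t < Lsum R s + Rsum R s - 2 * Hn R n by nra.
  rewrite /t in dl dr.
  by apply/andP; split; lra.
have hcheb : B * t ^+ 2 <= \sum_(s : 'S_n) f s.
  apply: le_trans (_ : \sum_(s : 'S_n) (if s \in ~: G then t ^+ 2 else 0) <= _).
    by rewrite -big_mkcond /= sumr_const /B mulr_natl.
  apply: ler_sum => s _; case: ifP => [/hbad //| _]; exact: sqr_ge0.
have hvar := varX R n.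
rewrite -cardsT -/N -/f in hvar.
have hBN : B * t ^+ 2 <= 8 * N * l.
  move: hH => /andP [_ hH2]; nra.
have key : B * eps ^+ 2 * l <= 32 * N.
  have t0 : 0 < t by rewrite /t; lra.
  have h1 : (eps * l) ^+ 2 <= 4 * t ^+ 2 by rewrite /t; nra.
  have h1' : B * (eps * l) ^+ 2 <= B * (4 * t ^+ 2) by apply: ler_wpM2l.
  have h2 : B * (eps * l) ^+ 2 <= 32 * N * l by nra.
  have h3 : (B * eps ^+ 2 * l) * l <= (32 * N) * l.
    by move: h2; rewrite exprMn; congr (_ <= _); ring.
  by rewrite -(ler_pM2r (_ : 0 < l)) //; lra.
apply/andP; split; first by apply: divr_ge0; lra.
have lpos : 0 < l by lra.
have e2 : 0 < eps ^+ 2 by rewrite exprn_gt0.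
have -> : B / N = 32 / (eps ^+ 2 * l) - (32 * N - B * eps ^+ 2 * l) / (N * (eps ^+ 2 * l)).
  by field; rewrite !gt_eqF.
rewrite lerBlDr lerDl; apply: divr_ge0; first lra.
by apply: mulr_ge0; apply: ltW => //; apply: mulr_gt0.
Qed.

Unset Implicit Arguments.
Local Open Scope classical_set_scope.
Theorem corollary2 (R : realType) (eps : R) (heps : 0 < eps) :
  prob_window eps n @[n --> \oo] --> (1 : R).
Proof.
apply/cvgrPdist_lt => d d0.
set K := 1 + 4 / eps + 32 / (eps ^+ 2 * d).
have e2 : 0 < eps ^+ 2 by rewrite exprn_gt0.
have A1 : 0 <= 4 / eps by apply: divr_ge0 => //; lra.
have A2 : 0 <= 32 / (eps ^+ 2 * d) by apply: divr_ge0 => //; apply: mulr_ge0; lra.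
move: (nbhs_infty_ger (expR K)); apply: filterS => m hm.
have eK : 0 < expR K := expR_gt0 K.
have m0 : (0 < m)%N by rewrite -(ltr0n R); lra.
have lK : K <= ln (m%:R : R).
  by rewrite -[X in X <= _](expRK K) ler_ln ?posrE // ltr0n.
have b := bound (eps := eps) m0 heps.
set l := ln (m%:R : R) in lK b.
have l1 : 1 <= l by rewrite /K in lK; lra.
have l4 : 4 <= eps * l.
  have : eps * (4 / eps) = 4 by field; rewrite gt_eqF.
  have : 4 / eps <= l by rewrite /K in lK; lra.
  nra.
have /andP [b1 b2] := b l1 l4.
have l32 : 32 / (eps ^+ 2 * l) < d.
  have h : 32 / (eps ^+ 2 * d) < l by rewrite /K in lK; lra.
  rewrite ltr_pdivrMr in h; last by apply: mulr_gt0.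
  rewrite ltr_pdivrMr; last by apply: mulr_gt0 => //; lra.
  nra.
rewrite ger0_norm //; lra.
Qed.
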